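(* Let $\mathcal{A}=\{a_1,\ldots,a_n\}$ be a set of $n$ distinct positive integers and let $\phi:\mathbb{R}^n_{\ge0}\to\mathbb{R}^n_{\ge0}$, $\phi_j(x)=\sum_{i=1}^n x_i^{a_j}$. Then $\phi$ is injective up to permuting coordinates: if $x,y\in\mathbb{R}^n_{\ge0}$ satisfy $\phi(x)=\phi(y)$, then $y$ is obtained from $x$ by a permutation of the coordinates. Equivalently, a vector in $\mathbb{R}^n_{\ge0}$ is determined up to permutation of coordinates by its $p$-norms $\|x\|_p=(\sum_i x_i^p)^{1/p}$ for $p\in\mathcal{A}$. *)

(* Defs.v *)
From mathcomp Require Import all_boot all_order all_algebra all_fingroup.
From mathcomp Require Import all_reals.
Set Implicit Arguments. Unset Strict Implicit. Unset Printing Implicit Defensive.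
Import Order.TTheory GRing.Theory Num.Theory.
Local Open Scope ring_scope.

Definition power_sum_map (R : realType) (n : nat) (a : 'I_n -> nat)
  (x : 'I_n -> R) : 'I_n -> R :=
  fun j => \sum_(i < n) x i ^+ a j.

(* Main.v *)
Require Import Defs.
From mathcomp Require Import all_boot all_order all_algebra all_fingroup.
From mathcomp Require Import all_reals.
From mathcomp Require Import polyrcf.
From mathcomp Require Import ring lra zify.
Import Order.TTheory GRing.Theory Num.Theory.
Local Open Scope ring_scope.
Set Implicit Arguments. Unset Strict Implicit.

Section Sparse.
Variable R : realType.

Definition sp n (e : 'I_n -> nat) (b : 'I_n -> R) : {poly R} :=
  \sum_(j < n) b j *: 'X^(e j).
Arguments sp {n}.

Lemma horner_sp n (e : 'I_n -> nat) (b : 'I_n -> R) (s : R) : (sp e b).[s] = \sum_(j < n) b j * s ^+ e j.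
Proof. by rewrite /sp horner_sum; apply: eq_bigr => j _; rewrite hornerZ hornerXn. Qed.

Lemma sp_scale n (e : 'I_n -> nat) (b : 'I_n -> R) (c : R) : sp e (fun j => c * b j) = c *: sp e b.
Proof. by rewrite /sp scaler_sumr; apply: eq_bigr => j _; rewrite scalerA. Qed.

Lemma deriv_sp n (e : 'I_n -> nat) (b : 'I_n -> R) :
  (sp e b)^`() = sp (fun j => (e j).-1) (fun j => b j * (e j)%:R).
Proof.
rewrite /sp linear_sum /=; apply: eq_bigr => j _.
by rewrite derivZ derivXn -scaler_nat scalerA.
Qed.

Lemma reduce n (e : 'I_n.+1 -> nat) (b : 'I_n.+1 -> R) : injective e -> (exists j, b j != 0) ->
  exists (k : nat) (P1 : {poly R}) (e' : 'I_n -> nat) (b' : 'I_n -> R),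
  [/\ sp e b = 'X^k * P1, injective e', P1^`() = sp e' b' &
      (exists i, b' i != 0) \/ (forall r, P1.[r] != 0)].
Proof.
move=> einj [j bj].
case: (@arg_minnP _ ord0 xpredT e isT) => j0 _ hmin.
have gt i : (e j0 < e (lift j0 i))%N.
  rewrite ltn_neqAle hmin // andbT (inj_eq einj).
  by rewrite neq_lift.
exists (e j0), (sp (fun j => e j - e j0)%N b).
exists (fun i => (e (lift j0 i) - e j0).-1)%N.
exists (fun i => b (lift j0 i) * (e (lift j0 i) - e j0)%:R).
split.
- rewrite /sp mulr_sumr; apply: eq_bigr => i _.
  by rewrite -scalerAr -exprD subnKC // hmin.
- move=> i i' /= h; apply: (@lift_inj _ j0); apply: einj.
  have := gt i; have := gt i'; lia.
- rewrite deriv_sp /sp (bigD1_ord j0) //= subnn mulr0 scale0r add0r.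
  by [].
- case: (boolP [exists i, b (lift j0 i) != 0]).
    move/existsP=> [i bi]; left; exists i.
    rewrite mulf_neq0 // pnatr_eq0 -lt0n subn_gt0; exact: gt.
  rewrite negb_exists => /forallP hb; right => r.
  rewrite horner_sp (bigD1_ord j0) //= subnn expr0 mulr1 big1 ?addr0.
    case: (unliftP j0 j) bj => [i ->|->] //.
    by move: (hb i) => /negPn /eqP ->; rewrite eqxx.
  by move=> i _; move: (hb i) => /negPn /eqP ->; rewrite mul0r.
Qed.

Lemma rolle_path (p : {poly R}) x l : path <%R x l -> root p x -> all (root p) l ->
  exists t, [/\ size t = size l, sorted <%R t, all (root p^`()) t,
     all (fun c => x < c) t & all (fun c => c \notin x :: l) t].
Proof.
elim: l x => [|y l IH] x /=; first by exists [::].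
move=> /andP[xy pl] rx /andP[ry rl].
have [t [st sot rt gt nt]] := IH y pl ry rl.
have [c] := @poly_rolle R x y p xy (etrans (eqP rx) (esym (eqP ry))).
rewrite in_itv /= => /andP[xc cy] rc.
have yl := order_path_min (@lt_trans _ R) pl.
exists (c :: t); split => /=.
- by rewrite st.
- rewrite path_min_sorted //; apply/allP => d dt.
  by apply: lt_trans cy _; move/allP: gt => /(_ d dt).
- by rewrite rt andbT; apply/eqP.
- rewrite xc /=; apply/allP => d dt.
  by apply: lt_trans xy _; move/allP: gt => /(_ d dt).
- apply/andP; split.
    rewrite !in_cons negb_or (gt_eqF xc) negb_or (lt_eqF cy) /=.
    apply/negP => cl; move/allP: yl => /(_ c cl); rewrite ltNge (ltW cy) //.
  apply/allP => d dt; move/allP: nt => /(_ d dt) ndl.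
  move/allP: gt => /(_ d dt) yd.
  rewrite in_cons negb_or ndl andbT.
  by rewrite gt_eqF // (lt_trans xy yd).
Qed.

Lemma rolle_uniq (p : {poly R}) s : uniq s -> all (fun r => 0 < r) s ->
  all (root p) s -> s != [::] ->
  exists t, [/\ (size t).+1 = size s, uniq t, all (fun r => 0 < r) t,
     all (root p^`()) t & all (fun c => c \notin s) t].
Proof.
move=> us ps rs sn0.
have ss : sorted <%R (sort <=%R s) by rewrite sort_lt_sorted.
have sz := size_sort <=%R s.
have ms := mem_sort <=%R s.
case E: (sort <=%R s) ss sz ms => [|x l] ss sz ms.
  by move: sn0; rewrite -size_eq0 -sz.
have xs : x \in s by rewrite -ms in_cons eqxx.
have rx : root p x by move/allP: rs => /(_ x xs).
have rl : all (root p) l.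
  by apply/allP => d dl; move/allP: rs; apply; rewrite -ms in_cons dl orbT.
have [t [st sot rt gt nt]] := rolle_path ss rx rl.
have x0 : 0 < x by move/allP: ps => /(_ x xs).
exists t; split.
- by rewrite st -sz.
- exact: lt_sorted_uniq.
- by apply/allP => d dt; apply: lt_trans x0 _; move/allP: gt => /(_ d dt).
- exact: rt.
- by apply/allP => d dt; move/allP: nt => /(_ d dt); rewrite ms.
Qed.

Lemma root_split k (P1 : {poly R}) r : 0 < r -> root ('X^k * P1) r = root P1 r.
Proof.
move=> r0; rewrite rootM; apply/idP/idP; last by move=> ->; rewrite orbT.
by case/orP => // ; rewrite /root hornerXn expf_eq0 gt_eqF // andbF.
Qed.

Lemma descartes n (e : 'I_n -> nat) (b : 'I_n -> R) : injective e ->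
  (exists j, b j != 0) -> forall s, uniq s -> all (fun r => 0 < r) s ->
  all (root (sp e b)) s -> (size s < n)%N.
Proof.
elim: n e b => [|n IH] e b einj bnz s us ps rs.
  by case: bnz => -[].
have [k [P1 [e' [b' [Esp inj' dP cases]]]]] := reduce einj bnz.
have rs1 : all (root P1) s.
  apply/allP => r rin; move/allP: rs => /(_ r rin); rewrite Esp root_split //.
  by move/allP: ps => /(_ r rin).
case: cases => [bnz'|nz].
  case: (eqVneq s [::]) => [->//|sn0].
  have [t [st ut pt rt _]] := rolle_uniq us ps rs1 sn0.
  rewrite dP in rt.
  by have := IH e' b' inj' bnz' t ut pt rt; rewrite -st.
case: s us ps rs rs1 => [//|r s] _ _ _ /andP[rr _].
by move: (nz r); rewrite -/(root P1 r) rr.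
Qed.

Lemma descartes2 n (e : 'I_n -> nat) (b : 'I_n -> R) : injective e ->
  (exists j, b j != 0) -> forall s rho, uniq s -> all (fun r => 0 < r) s ->
  all (root (sp e b)) s -> rho \in s -> (sp e b)^`().[rho] = 0 ->
  ((size s).+1 < n)%N.
Proof.
case: n e b => [|n] e b einj bnz s rho us ps rs rhos d0.
  by case: bnz => -[].
have [k [P1 [e' [b' [Esp inj' dP cases]]]]] := reduce einj bnz.
have rho0 : 0 < rho by move/allP: ps => /(_ rho rhos).
have rs1 : all (root P1) s.
  apply/allP => r rin; move/allP: rs => /(_ r rin); rewrite Esp root_split //.
  by move/allP: ps => /(_ r rin).
have r1 : P1.[rho] = 0 by apply/eqP; move/allP: rs1 => /(_ rho rhos).
have d1 : P1^`().[rho] = 0.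
  move: d0; rewrite Esp derivM hornerD !hornerM r1 mulr0 add0r hornerXn.
  by move/eqP; rewrite mulf_eq0 expf_eq0 (gt_eqF rho0) andbF /= => /eqP.
case: cases => [bnz'|nz].
  have sn0 : s != [::] by case: s rhos {us ps rs rs1}.
  have [t [st ut pt rt nt]] := rolle_uniq us ps rs1 sn0.
  have := @descartes _ _ _ inj' bnz' (rho :: t).
  have rr : root (sp e' b') rho by rewrite -dP /root d1.
  rewrite -dP in rr.
  rewrite /= ut rho0 pt -dP rr rt andbT /=.
  have -> : rho \notin t.
    by apply/negP => rt'; move/allP: nt => /(_ rho rt'); rewrite rhos.
  by move=> /(_ isT isT isT); rewrite -st.
by move: (nz rho); rewrite r1 eqxx.
Qed.

End Sparse.

Section Sign.
Variable R : realType.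

Lemma pos_combine (a c d : R) : 0 < a * c -> 0 < d * c -> 0 < a * d.
Proof. move=> h1 h2; nra. Qed.

Lemma kernel_vec n (Z : seq R) (e : 'I_n.+1 -> nat) : size Z = n ->
  exists b : 'I_n.+1 -> R, (exists j, b j != 0) /\ all (root (sp e b)) Z.
Proof.
move=> sZ.
pose A : 'M[R]_(n.+1, n) := \matrix_(j, i) (nth 0 Z i) ^+ e j.
pose K := kermx A.
have KA := mulmx_ker A.
have Knz : K != 0.
  rewrite -mxrank_eq0 mxrank_ker subn_eq0 -ltnNge ltnS; exact: rank_leq_col.
case: (pickP (fun ij : 'I_n.+1 * 'I_n.+1 => K ij.1 ij.2 != 0)) => [[i0 j0] /= hK|hK].
  exists (fun j => K i0 j); split; first by exists j0.
  apply/allP => z zZ.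
  have ilt : (index z Z < n)%N by rewrite -sZ index_mem.
  have := congr1 (fun M : 'M[R]_(n.+1, n) => M i0 (Ordinal ilt)) KA.
  rewrite !mxE /root horner_sp => h.
  apply/eqP; apply: etrans _ h; apply: eq_bigr => j _; by rewrite [A j _]mxE /= nth_index.
move: Knz; have -> : K = 0.
  by apply/matrixP => i j; rewrite [RHS]mxE; apply/eqP/negbFE; exact: (hK (i, j)).
by rewrite eqxx.
Qed.

Lemma sign_poly n (e : 'I_n.+1 -> nat) (Z : seq R) : injective e -> uniq Z ->
  all (fun r => 0 < r) Z -> size Z = n ->
  exists b : 'I_n.+1 -> R, forall s, 0 < s -> s \notin Z ->
    0 < (sp e b).[s] * \prod_(z <- Z) (s - z).
Proof.
move=> einj uZ pZ sZ.
have [b [bnz rZ]] := kernel_vec e sZ.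
have [H EH] := uniq_roots_prod_XsubC rZ (eq_ind_r is_true uZ (uniq_rootsE Z)).
have Hnz r : 0 < r -> H.[r] != 0.
  move=> r0; apply/negP => /eqP Hr.
  case: (boolP (r \in Z)) => rZ'.
    suff: (sp e b)^`().[r] = 0.
      by move/(descartes2 einj bnz uZ pZ rZ rZ'); rewrite sZ ltnn.
    rewrite EH (big_rem r rZ') /=.
    set G := \prod_(_ <- _) _.
    rewrite mulrCA derivM derivXsubC mul1r hornerD !hornerM hornerXsubC subrr.
    by rewrite mul0r addr0 Hr mul0r.
  have rr : root (sp e b) r by rewrite /root EH hornerM Hr mul0r.
  have := @descartes _ _ _ _ einj bnz (r :: Z).
  by rewrite /= rZ' uZ r0 pZ rZ sZ ltnn rr; move/(_ isT isT isT).
pose h := H.[1].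
have hH s : 0 < s -> 0 < h * H.[s].
  move=> s0; rewrite ltNge; apply/negP => hle.
  case: (lerP s 1) => hs.
    have [u] := @polyrcf.poly_ivt R H s 1 hs (ltac:(by move: hle; rewrite /h mulrC)).
    rewrite in_itv /= => /andP[su _] ru.
    by move: (Hnz u (lt_le_trans s0 su)); rewrite -/(root H u) ru.
  have [u] := @polyrcf.poly_ivt R H 1 s (ltW hs) hle.
  rewrite in_itv /= => /andP[su _] ru.
  by move: (Hnz u (lt_le_trans ltr01 su)); rewrite -/(root H u) ru.
exists (fun j => h * b j) => s s0 sZ'.
rewrite sp_scale hornerZ EH hornerM horner_prod.
under eq_bigr do rewrite hornerXsubC.
set P := \prod_(_ <- _) _.
have Pnz : P != 0.
  rewrite prodf_seq_neq0; apply/allP => z zZ /=; rewrite subr_eq0.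
  by apply/negP => /eqP sz; move: sZ'; rewrite sz zZ.
have P2 : 0 < P ^+ 2 by rewrite exprn_even_gt0.
have := hH s s0; rewrite expr2 in P2; nra.
Qed.

Lemma neg_prod (l : seq R) s : all (fun z => s < z) l ->
  0 < (-1) ^+ size l * \prod_(z <- l) (s - z).
Proof.
elim: l => [|z l IH] /=; first by rewrite big_nil mulr1 ltr01.
move=> /andP[sz hl]; rewrite big_cons exprS.
have -> : -1 * (-1) ^+ size l * ((s - z) * \prod_(j <- l) (s - j)) =
  (z - s) * ((-1) ^+ size l * \prod_(j <- l) (s - j)) by ring.
by rewrite mulr_gt0 ?subr_gt0 ?IH.
Qed.

Lemma sign_poly_pad n (e : 'I_n.+1 -> nat) (Z : seq R) (T : R) : injective e ->
  uniq Z -> all (fun r => 0 < r) Z -> (size Z <= n)%N -> 0 < T ->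
  all (fun z => z < T) Z ->
  exists b : 'I_n.+1 -> R, forall s, 0 < s -> s < T -> s \notin Z ->
    0 < (sp e b).[s] * \prod_(z <- Z) (s - z).
Proof.
move=> einj uZ pZ sZ T0 ZT.
pose pad := [seq T + i%:R | i <- iota 0 (n - size Z)].
have padT z : z \in pad -> T <= z.
  by case/mapP => i _ ->; rewrite lerDl ler0n.
have upad : uniq pad.
  rewrite map_inj_uniq ?iota_uniq // => i j /addrI /eqP; rewrite eqr_nat => /eqP.
  done.
have uZf : uniq (Z ++ pad).
  rewrite cat_uniq uZ upad andbT /=; apply/hasPn => z zp; apply/negP => zZ.
  by move/allP: ZT => /(_ z zZ); rewrite ltNge padT.
have pZf : all (fun r => 0 < r) (Z ++ pad).
  rewrite all_cat pZ /=; apply/allP => z zp; exact: lt_le_trans T0 (padT z zp).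
have sZf : size (Z ++ pad) = n by rewrite size_cat size_map size_iota subnKC.
have [b hb] := sign_poly einj uZf pZf sZf.
exists (fun j => (-1) ^+ size pad * b j) => s s0 sT sZ'.
have sZf' : s \notin Z ++ pad.
  rewrite mem_cat negb_or sZ' /=; apply/negP => sp'.
  by move: (padT s sp'); rewrite leNgt sT.
have h1 := hb s s0 sZf'; rewrite big_cat /= mulrA in h1.
have h2 : 0 < (-1) ^+ size pad * \prod_(z <- pad) (s - z).
  apply: neg_prod; apply/allP => z zp; exact: lt_le_trans sT (padT z zp).
rewrite sp_scale hornerZ -mulrA [X in 0 < X]mulrC.
exact: pos_combine h1 h2.
Qed.

End Sign.

Section Comb.
Variable R : realType.

Definition btw (p : R * R) (s : R) :=
  ((p.1 < s) && (s < p.2)) || ((p.2 < s) && (s < p.1)).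
Definition dom (p q : R * R) := (q.1 <= p.1) && (q.2 <= p.2).

Lemma prod_pos (Z : seq R) s : (forall z, z \in Z -> z < s) ->
  0 < \prod_(z <- Z) (s - z).
Proof.
by move=> h; rewrite big_seq; apply: prodr_gt0 => z zZ; rewrite subr_gt0 h.
Qed.

Lemma nd_cases (p : R * R) : p.1 != p.2 -> p.1 < p.2 \/ p.2 < p.1.
Proof. by move=> h; case: (ltgtP p.1 p.2) h => // _ ; [left|right]. Qed.

Lemma switches (l : seq (R * R)) : l != [::] -> pairwise dom l ->
  all (fun p => p.1 != p.2) l -> all (fun p => (0 <= p.1) && (0 <= p.2)) l ->
  exists (Z : seq R) (eps : R), [/\ uniq Z, all (fun z => 0 < z) Z,
    (size Z < size l)%N,
    all (fun z => (z <= (head (0, 0) l).1) && (z <= (head (0, 0) l).2)) Z &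
    forall p, p \in l -> forall s, btw p s ->
      0 < eps * (p.1 - p.2) * \prod_(z <- Z) (s - z)].
Proof.
elim: l => [//|p0 rest IH] _ /= /andP[hd pw] /andP[nd0 nd] /andP[nn0 nn].
case: rest IH hd pw nd nn => [|p1 rest'] IH hd pw nd nn.
  exists [::], (p0.1 - p0.2); split => //= p; rewrite inE => /eqP -> s _.
  rewrite big_nil mulr1 -expr2 exprn_even_gt0 //= subr_eq0 nd0 //.
have [Z' [eps' [uZ pZ sZ hZ hP]]] := IH isT pw nd nn.
rewrite /= in hZ.
move: hd => /= /andP[d01 hd]; move: d01 => /andP[d01a d01b].
move: pw => /= /andP[pw1 _].
move: nd => /= /andP[nd1 _]; move: nn => /= /andP[/andP[nn1a nn1b] _].
have hZ' z : z \in Z' -> (z <= p1.1) && (z <= p1.2) by move=> zZ; move/allP: hZ; apply.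
have below q : q \in p1 :: rest' -> (q.1 <= p1.1) && (q.2 <= p1.2).
  rewrite inE => /orP[/eqP ->|qr]; first by rewrite !lexx.
  by move/allP: pw1 => /(_ q qr).
have e1 : 0 < eps' * (p1.1 - p1.2).
  pose s1 := (p1.1 + p1.2) / 2.
  have bs1 : btw p1 s1.
    by rewrite /btw /s1; case: (nd_cases nd1) => h; apply/orP; [left|right];
      apply/andP; split; lra.
  have := hP p1 (mem_head _ _) s1 bs1.
  rewrite pmulr_lgt0 //; apply: prod_pos => z /hZ' /andP[za zb].
  by rewrite /s1; case: (nd_cases nd1) => h; lra.
case: (ltP 0 (eps' * (p0.1 - p0.2))) => hs.
  exists Z', eps'; split => //.
  - exact: ltnW.
  - apply/allP => z /hZ' /andP[za zb]; apply/andP; split; lra.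
  move=> p; rewrite inE => /orP[/eqP ->|pr] s bs; last exact: hP.
  rewrite mulr_gt0 //; apply: prod_pos => z /hZ' /andP[za zb].
  by move: bs; rewrite /btw => /orP[] /andP[h1 h2]; lra.
have [z0 [z0a z0b z0s z01a z01b]] : exists z0, [/\ z0 <= p0.1, z0 <= p0.2,
    forall s, btw p0 s -> z0 < s, p1.1 <= z0 & p1.2 <= z0].
  case: (nd_cases nd0) => h.
    have h1 : p1.2 < p1.1 by nra.
    exists p0.1; split; try lra.
    by move=> s; rewrite /btw => /orP[] /andP[]; lra.
  have h1 : p1.1 < p1.2 by nra.
  exists p0.2; split; try lra.
  by move=> s; rewrite /btw => /orP[] /andP[]; lra.
have zlt z : z \in Z' -> z < z0.
  move=> /hZ' /andP[za zb]; case: (nd_cases nd1) => h; lra.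
have eps0 : 0 < - eps' * (p0.1 - p0.2).
  rewrite mulNr oppr_gt0 lt_neqAle hs andbT mulf_neq0 //.
    by apply/eqP => e0; move: e1; rewrite e0 mul0r ltxx.
  by rewrite subr_eq0.
exists (z0 :: Z'), (- eps'); split => /=.
- by rewrite uZ andbT; apply/negP => /zlt; rewrite ltxx.
- rewrite pZ andbT; case: (nd_cases nd1) => h; lra.
- by [].
- rewrite z0a z0b /=; apply/allP => z /hZ' /andP[za zb]; apply/andP; split; lra.
move=> p; rewrite inE => /orP[/eqP ->|pr] s bs; rewrite big_cons.
  have sz0 := z0s s bs.
  rewrite mulr_gt0 // mulr_gt0 ?subr_gt0 //; apply: prod_pos => z /zlt; lra.
have hp := hP p pr s bs.
have sz0 : s < z0.
  have /andP[qa qb] := below p pr.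
  by move: bs; rewrite /btw => /orP[] /andP[h1 h2]; lra.
have -> : - eps' * (p.1 - p.2) * ((s - z0) * \prod_(j <- Z') (s - j)) =
  (eps' * (p.1 - p.2) * \prod_(j <- Z') (s - j)) * (z0 - s) by ring.
by rewrite mulr_gt0 // subr_gt0.
Qed.

End Comb.

Section Aux.
Variable R : realType.

Lemma mem_zip2 (s t : seq R) p : p \in zip s t -> (p.1 \in s) && (p.2 \in t).
Proof.
elim: s t => [|u s IH] [|w t] //=.
rewrite inE => /orP[/eqP ->|pz]; first by rewrite !mem_head.
by have /andP[h1 h2] := IH t pz; rewrite !inE h1 h2 !orbT.
Qed.

Lemma zip_eq (s t : seq R) : size s = size t ->
  (forall p, p \in zip s t -> p.1 = p.2) -> s = t.
Proof.
elim: s t => [|u s IH] [|w t] //= [sz] h.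
have -> : u = w by exact: (h (u, w) (mem_head _ _)).
rewrite (IH t sz) // => p pz.
by apply: h; rewrite inE pz orbT.
Qed.

Lemma zip_pairwise (s t : seq R) :
  pairwise (fun u v : R => v <= u) s -> pairwise (fun u v : R => v <= u) t ->
  pairwise (@dom R) (zip s t).
Proof.
elim: s t => [|u s IH] [|w t] //= /andP[hs ps] /andP[ht pt].
rewrite IH // andbT; apply/allP => p /mem_zip2 /andP[p1 p2].
by rewrite /dom /= (allP hs _ p1) (allP ht _ p2).
Qed.

Lemma sum_zip (f : R -> R) (s t : seq R) : size s = size t ->
  \sum_(u <- s) f u - \sum_(w <- t) f w = \sum_(p <- zip s t) (f p.1 - f p.2).
Proof.
elim: s t => [|u s IH] [|w t] //= sz; first by rewrite !big_nil subr0.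
rewrite !big_cons -IH; last by case: sz.
ring.
Qed.

Lemma sum_pos (l : seq (R * R)) (g : R * R -> R) : l != [::] ->
  (forall p, p \in l -> 0 < g p) -> 0 < \sum_(p <- l) g p.
Proof.
case: l => [//|p l] _ h; rewrite big_cons.
apply: lt_le_trans (h p (mem_head _ _)) _.
rewrite lerDl big_seq sumr_ge0 // => q ql; apply: ltW; apply: h.
by rewrite inE ql orbT.
Qed.

End Aux.

Unset Implicit Arguments. Set Strict Implicit.

Theorem proposition5p1 (R : realType) (n : nat) (a : 'I_n -> nat)
  (a_inj : injective a) (a_pos : forall j, (0 < a j)%N)
  (x y : 'I_n -> R)
  (hx : forall i, 0 <= x i) (hy : forall i, 0 <= y i)
  (hphi : power_sum_map a x = power_sum_map a y) :
  exists s : 'S_n, forall i, y i = x (s i).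
Proof.
case: n a a_inj a_pos x y hx hy hphi => [|n] a a_inj a_pos x y hx hy hphi.
  by exists 1%g => -[].
pose ge := fun u v : R => v <= u.
have ge_total : total ge by move=> u v; rewrite /ge le_total.
have ge_trans : transitive ge by move=> v u w h1 h2; rewrite /ge (le_trans h2 h1).
pose tx := [tuple x i | i < n.+1].
pose ty := [tuple y i | i < n.+1].
pose sx := sort ge tx.
pose sy := sort ge ty.
have szx : size sx = n.+1 by rewrite size_sort size_tuple.
have szy : size sy = n.+1 by rewrite size_sort size_tuple.
have memx u : u \in sx -> exists i, u = x i.
  rewrite mem_sort => /tnthP [i ->]; exists i; by rewrite tnth_mktuple.
have memy u : u \in sy -> exists i, u = y i.
  rewrite mem_sort => /tnthP [i ->]; exists i; by rewrite tnth_mktuple.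
pose T := 1 + \sum_i (x i + y i).
have le_sum i : x i + y i <= \sum_j (x j + y j).
  rewrite (bigD1 i) //= lerDl sumr_ge0 // => j _; exact: addr_ge0.
have xT i : x i < T by have := le_sum i; have := hy i; rewrite /T; lra.
have yT i : y i < T by have := le_sum i; have := hx i; rewrite /T; lra.
pose l := [seq p <- zip sx sy | p.1 != p.2].
suff l0 : l = [::].
  have sxy : sx = sy.
    apply: zip_eq; first by rewrite szx szy.
    move=> p pz; apply/eqP; apply/negPn/negP => hp.
    have : p \in l by rewrite mem_filter hp pz.
    by rewrite l0.
  have pxy : perm_eq ty tx.
    have h1 := permEl (perm_sort ge ty); have h2 := permEl (perm_sort ge tx).
    rewrite -/sy -/sx in h1 h2; rewrite perm_sym in h1.
    by apply: perm_trans h1 _; rewrite -sxy.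
  have [s hs] := tuple_permP pxy.
  exists s => i.
  have := congr1 (fun t : seq R => nth 0 t i) hs.
  by rewrite /= !nth_mktuple tnth_mktuple.
apply/eqP; apply/negP => /negP ln0.
have pwl : pairwise (@dom R) l.
  apply: pairwise_filter; apply: zip_pairwise; rewrite -sorted_pairwise //;
  exact: sort_sorted.
have ndl : all (fun p => p.1 != p.2) l by exact: filter_all.
have inl p : p \in l -> (exists i, p.1 = x i) /\ (exists i, p.2 = y i).
  rewrite mem_filter => /andP[_ /mem_zip2 /andP[h1 h2]].
  by split; [apply: memx|apply: memy].
have nnl : all (fun p => (0 <= p.1) && (0 <= p.2)) l.
  apply/allP => p /inl [[i ->] [j ->]]; by rewrite hx hy.
have [Z [eps [uZ pZ sZ hZ hP]]] := switches ln0 pwl ndl nnl.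
have hl : head (0, 0) l \in l by case: (l) ln0 => // p l' _; rewrite mem_head.
have [[i0 hi0] _] := inl _ hl.
have ZT : all (fun z => z < T) Z.
  apply/allP => z zZ; move/allP: hZ => /(_ z zZ) /andP[h1 _].
  by apply: le_lt_trans h1 _; rewrite hi0.
have sZn : (size Z <= n)%N.
  have : (size l <= n.+1)%N.
    by rewrite size_filter (leq_trans (count_size _ _)) // size_zip szx szy minnn.
  by move=> h; rewrite -ltnS; exact: leq_trans sZ h.
pose e := fun j => (a j).-1.
have einj : injective e.
  move=> j k; rewrite /e => h; apply: a_inj; have := a_pos j; have := a_pos k; lia.
have T0 : 0 < T by apply: le_lt_trans (xT ord0); exact: hx.
have [b hb] := sign_poly_pad einj uZ pZ sZn T0 ZT.
pose Q := sp a (fun j => eps * b j / (a j)%:R).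
have dQ : Q^`() = eps *: sp e b.
  rewrite deriv_sp -sp_scale /sp; apply: eq_bigr => j _.
  by rewrite divfK // pnatr_eq0 -lt0n a_pos.
have hQ (z : 'I_n.+1 -> R) : \sum_i Q.[z i] =
    \sum_j (eps * b j / (a j)%:R) * power_sum_map a z j.
  rewrite /power_sum_map.
  under eq_bigr do rewrite horner_sp.
  rewrite exchange_big /=; apply: eq_bigr => j _; by rewrite mulr_sumr.
have sum0 : \sum_(p <- l) (Q.[p.1] - Q.[p.2]) = 0.
  rewrite big_filter.
  have -> : \sum_(p <- zip sx sy | p.1 != p.2) (Q.[p.1] - Q.[p.2]) =
     \sum_(p <- zip sx sy) (Q.[p.1] - Q.[p.2]).
    rewrite [RHS](bigID (fun p => p.1 != p.2)) /= [X in _ = _ + X]big1 ?addr0 // => p /negPn/eqP ->.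
    by rewrite subrr.
  rewrite -sum_zip ?szx ?szy //.
  rewrite (perm_big _ (permEl (perm_sort ge tx))) (perm_big _ (permEl (perm_sort ge ty))).
  rewrite !big_tuple.
  under eq_bigr do rewrite tnth_mktuple.
  under [X in _ - X]eq_bigr do rewrite tnth_mktuple.
  by rewrite !hQ hphi subrr.
suff : 0 < \sum_(p <- l) (Q.[p.1] - Q.[p.2]) by rewrite sum0 ltxx.
apply: sum_pos => // p pl.
have ndp : p.1 != p.2 by move/allP: ndl => /(_ p pl).
have [[i1 h1] [i2 h2]] := inl p pl.
have [c bc hc] : exists2 c, btw p c & Q.[p.1] - Q.[p.2] = Q^`().[c] * (p.1 - p.2).
  case: (nd_cases ndp) => h.
    have [c] := poly_mvt Q h; rewrite in_itv /= => /andP[c1 c2] hc.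
    exists c; first by rewrite /btw c1 c2.
    by rewrite -opprB hc -mulrN opprB.
  have [c] := poly_mvt Q h; rewrite in_itv /= => /andP[c1 c2] hc.
  exists c; first by rewrite /btw c1 c2 orbT.
  exact: hc.
have hp := hP p pl c bc.
have c0 : 0 < c.
  move: bc; rewrite /btw => /orP[] /andP[u1 _]; apply: le_lt_trans u1;
  by rewrite ?h1 ?h2.
have cT : c < T.
  move: bc; rewrite /btw => /orP[] /andP[_ u2]; apply: lt_trans u2 _;
  by rewrite ?h1 ?h2.
have cZ : c \notin Z.
  apply/negP => cz; move: hp; rewrite (big_rem c cz) /= subrr mul0r mulr0 ltxx.
  by [].
have hb' := hb c c0 cT cZ.
rewrite hc dQ hornerZ.
have := pos_combine hp hb'.
by rewrite mulrAC.
Qed.
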